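(* Let $\{S_i\mid i\in I\}$ be a collection of semigroups and let $F=\prod^{*}\{S_i\mid i\in I\}$ be their semigroup free product. Then $F^1$ is weakly right coherent if and only if each $S_i^1$ ($i\in I$) is weakly right coherent.
   Context: For a semigroup $S$, $S^1$ denotes $S$ if $S$ is a monoid and otherwise $S$ with an identity adjoined. A monoid $M$ is weakly right coherent (WRC) if every finitely generated right ideal of $M$ is finitely presented as a right $M$-act (known to be equivalent to: $M$ is right ideal Howson, i.e. the intersection of any two finitely generated right ideals is finitely generated, and finitely right equated, i.e. every $\mathbf{r}_M(a)=\{(s,t)\mid as=at\}$ is finitely generated as a right congruence). The semigroup free product of pairwise disjoint semigroups $S_i$ consists of sequences $s_1*\dots*s_n$ with $s_j\in\bigsqcup S_i$ and consecutive entries from different $S_i$, multiplied by concatenation, multiplying the two adjacent entries if they lie in the same $S_i$. *)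

(* Defs.v *)
From Stdlib Require Import List ClassicalEpsilon.
From mathcomp Require Import ssreflect ssrfun ssrbool eqtype ssrnat fintype.
Set Implicit Arguments. Unset Strict Implicit. Unset Printing Implicit Defensive.

Definition is_identity {M : Type} (mul : M -> M -> M) (e : M) : Prop :=
  forall x, mul e x = x /\ mul x e = x.

Definition fg_right_ideal {M : Type} (mul : M -> M -> M) (X : M -> Prop) : Prop :=
  exists (n : nat) (a : 'I_n -> M),
    forall y, X y <-> exists (k : 'I_n) (m : M), y = mul (a k) m.

(* The free right M-act of rank n is 'I_n * M with (k,m).s = (k, m s).
   A right congruence on it: *)
Definition right_congruence {M : Type} (mul : M -> M -> M) {n : nat}
    (R : 'I_n * M -> 'I_n * M -> Prop) : Prop :=
  (forall p, R p p) /\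
  (forall p q, R p q -> R q p) /\
  (forall p q r, R p q -> R q r -> R p r) /\
  (forall p q (s : M), R p q -> R (p.1, mul p.2 s) (q.1, mul q.2 s)).

Definition cong_gen {M : Type} (mul : M -> M -> M) {n : nat}
    (H : list (('I_n * M) * ('I_n * M))) (p q : 'I_n * M) : Prop :=
  forall R : 'I_n * M -> 'I_n * M -> Prop,
    right_congruence mul R -> (forall h, In h H -> R h.1 h.2) -> R p q.

(* The right ideal X, viewed as a right M-act, is finitely presented:
   there is a surjective act morphism from a free act of finite rank onto X,
   (k,m) |-> x_k m, whose kernel is a finitely generated right congruence. *)
Definition fp_right_ideal {M : Type} (mul : M -> M -> M) (X : M -> Prop) : Prop :=
  exists (n : nat) (x : 'I_n -> M) (H : list (('I_n * M) * ('I_n * M))),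
    (forall k, X (x k)) /\
    (forall y, X y -> exists (k : 'I_n) (m : M), y = mul (x k) m) /\
    (forall p q : 'I_n * M,
        mul (x p.1) p.2 = mul (x q.1) q.2 <-> cong_gen mul H p q).

(* Weakly right coherent monoid (the identity is only used implicitly). *)
Definition WRC {M : Type} (mul : M -> M -> M) : Prop :=
  forall X : M -> Prop, fg_right_ideal mul X -> fp_right_ideal mul X.

(* S with an identity adjoined (None is the new identity). *)
Definition adjoin_one {T : Type} (op : T -> T -> T) (x y : option T) : option T :=
  match x, y with
  | None, _ => y
  | _, None => x
  | Some a, Some b => Some (op a b)
  end.

(* "S^1 is weakly right coherent": S^1 = S if S is a monoid, otherwise S with
   an identity adjoined. *)
Definition WRC1 {T : Type} (op : T -> T -> T) : Prop :=
  ((exists e, is_identity op e) -> WRC op) /\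
  ((~ exists e, is_identity op e) -> WRC (adjoin_one op)).

Section FreeProduct.
Variables (I : Type) (S : I -> Type) (op : forall i, S i -> S i -> S i).

Fixpoint alt (w : list (sigT S)) : Prop :=
  match w with
  | x :: w' => match w' with
               | y :: _ => projT1 x <> projT1 y /\ alt w'
               | nil => True
               end
  | nil => True
  end.

Definition merge_letters (x y : sigT S) : option (sigT S) :=
  match excluded_middle_informative (projT1 x = projT1 y) with
  | left e => Some (existT S (projT1 y)
                      (op (eq_rect _ S (projT2 x) _ e) (projT2 y)))
  | right _ => None
  end.

Fixpoint wmul (u v : list (sigT S)) : list (sigT S) :=
  match u with
  | nil => v
  | x :: u' =>
    match u' with
    | nil => match v with
             | nil => x :: nil
             | y :: v' => match merge_letters x y with
                          | Some z => z :: v'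
                          | None => x :: y :: v'
                          end
             end
    | _ :: _ => x :: wmul u' v
    end
  end.

Lemma merge_tag x y z : merge_letters x y = Some z -> projT1 z = projT1 y.
Proof.
rewrite /merge_letters; case: excluded_middle_informative => // e [<-] //.
Qed.

Lemma merge_none x y : merge_letters x y = None -> projT1 x <> projT1 y.
Proof. rewrite /merge_letters; case: excluded_middle_informative => //. Qed.

Lemma alt_tail x w : alt (x :: w) -> alt w.
Proof. by case: w => [|y w] //= [_ ?]. Qed.

Lemma alt_head_change z y w : projT1 z = projT1 y -> alt (y :: w) -> alt (z :: w).
Proof. by case: w => [|t w] //= -> . Qed.


Lemma wmul_hd x u v : exists x' r, wmul (x :: u) v = x' :: r /\ projT1 x' = projT1 x.
Proof.
case: u => [|y u] /=.
- case: v => [|y v]; first by exists x, nil.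
  case E: (merge_letters x y) => [z|].
  + exists z, v; split => //. rewrite (merge_tag E).
    move: E; rewrite /merge_letters; case: excluded_middle_informative => // e _; by rewrite e.
  + by exists x, (y :: v).
- by exists x, (wmul (y :: u) v).
Qed.

Lemma wmul_alt u v : alt u -> alt v -> alt (wmul u v).
Proof.
elim: u => [|x u IH] //= Hu Hv.
case: u IH Hu => [|y u] IH Hu.
- clear IH; case: v Hv => [|y v] Hv //.
  case E: (merge_letters x y) => [z|].
  + exact: alt_head_change (merge_tag E) Hv.
  + by split; [exact: merge_none E|].
- case: Hu => Hxy Hu.
  have := IH Hu Hv. case: (wmul_hd y u v) => x' [r [-> Ht]] Halt.
  by split => //; rewrite Ht.
Qed.

Lemma wmul_nonnil u v : u <> nil -> wmul u v <> nil.
Proof. by case: u => [//|x u] _; case: (wmul_hd x u v) => x' [r [-> _]]. Qed.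

Definition FP : Type := { w : list (sigT S) | w <> nil /\ alt w }.

Definition fp_mul (u v : FP) : FP :=
  exist _ (wmul (proj1_sig u) (proj1_sig v))
    (conj (@wmul_nonnil _ (proj1_sig v) (proj1 (proj2_sig u)))
          (wmul_alt (proj2 (proj2_sig u)) (proj2 (proj2_sig v)))).

End FreeProduct.

(* Main.v *)
Require Import Defs.
From mathcomp Require Import ssreflect ssrfun ssrbool eqtype ssrnat seq fintype.
From Stdlib Require Import List ClassicalEpsilon ProofIrrelevance.
Set Implicit Arguments. Unset Strict Implicit. Unset Printing Implicit Defensive.

Lemma choice_fun {A B : Type} (P : A -> B -> Prop) :
  (forall a, exists b, P a b) -> exists f, forall a, P a (f a).
Proof.
move=> H; exists (fun a => proj1_sig (constructive_indefinite_description _ (H a))).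
move=> a; exact: proj2_sig (constructive_indefinite_description _ (H a)).
Qed.

Definition rcong {M : Type} (mul : M -> M -> M) (R : M -> M -> Prop) :=
  (forall p, R p p) /\ (forall p q, R p q -> R q p) /\
  (forall p q r, R p q -> R q r -> R p r) /\
  (forall p q s, R p q -> R (mul p s) (mul q s)).

Definition cg {M : Type} (mul : M -> M -> M) (G : list (M * M)) (s t : M) :=
  forall R, rcong mul R -> (forall h, In h G -> R h.1 h.2) -> R s t.

Definition FRE {M : Type} (mul : M -> M -> M) :=
  forall a, exists G, forall s t, mul a s = mul a t <-> cg mul G s t.

Definition PH {M : Type} (mul : M -> M -> M) :=
  forall a b, exists L : list (M * M),
    (forall p, In p L -> mul a p.1 = mul b p.2) /\
    (forall s t, mul a s = mul b t ->
       exists p, In p L /\ exists m, mul a s = mul (mul a p.1) m).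

Lemma cg_rcong {M} (mul : M -> M -> M) G : rcong mul (cg mul G).
Proof.
split; [|split; [|split]].
- by move=> p R [Rr _].
- by move=> p q H R RR HG; case: (RR) => [_ [Rs _]]; apply: Rs; apply: H.
- move=> p q r H1 H2 R RR HG; case: (RR) => [_ [_ [Rt _]]]; apply: Rt (H1 R RR HG) (H2 R RR HG).
- move=> p q s H R RR HG; case: (RR) => [_ [_ [_ Rc]]]; apply: Rc; exact: H.
Qed.

Lemma cg_gen {M} (mul : M -> M -> M) G h : In h G -> cg mul G h.1 h.2.
Proof. by move=> Hh R RR HG; apply: HG. Qed.

Lemma cg_trans {M} (mul : M -> M -> M) G s t r : cg mul G s t -> cg mul G t r -> cg mul G s r.
Proof. by case: (cg_rcong mul G) => [_ [_ [T _]]]; apply: T. Qed.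
Lemma cg_sym {M} (mul : M -> M -> M) G s t : cg mul G s t -> cg mul G t s.
Proof. by case: (cg_rcong mul G) => [_ [S _]]; apply: S. Qed.
Lemma cg_refl {M} (mul : M -> M -> M) G s : cg mul G s s.
Proof. by case: (cg_rcong mul G) => [R _]; apply: R. Qed.
Lemma cg_rmul {M} (mul : M -> M -> M) G s t r : cg mul G s t -> cg mul G (mul s r) (mul t r).
Proof. by case: (cg_rcong mul G) => [_ [_ [_ C]]]; apply: C. Qed.

Lemma cg_map {M N} (mul : M -> M -> M) (mulN : N -> N -> N) (f : M -> N)
  (fm : forall x y, f (mul x y) = mulN (f x) (f y)) G s t :
  cg mul G s t -> cg mulN (map (fun h => (f h.1, f h.2)) G) (f s) (f t).
Proof.
move=> H R RR HG.
apply: (H (fun x y => R (f x) (f y))).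
- case: RR => [Rr [Rs [Rt Rc]]]; split; [|split; [|split]].
  + by move=> p; apply: Rr.
  + by move=> p q; apply: Rs.
  + by move=> p q r; apply: Rt.
  + by move=> p q r Hpq; rewrite !fm; apply: Rc.
- move=> h Hh; apply: (HG (f h.1, f h.2)).
  by apply: (in_map (fun h => (f h.1, f h.2))).
Qed.

Lemma cg_sub {M} (mul : M -> M -> M) G G' s t :
  (forall h, In h G -> cg mul G' h.1 h.2) -> cg mul G s t -> cg mul G' s t.
Proof. move=> HG H; apply: H => //; exact: cg_rcong. Qed.

Lemma in_enum_ord n (k : 'I_n) : In k (enum 'I_n).
Proof.
have : k \in (enum 'I_n : list 'I_n) by rewrite mem_enum.
elim: (enum 'I_n) => [|y s IH] //=; rewrite inE; case/orP => [/eqP ->|/IH]; auto.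
Qed.

Section Mon.
Variables (M : Type) (mul : M -> M -> M) (e : M).
Hypothesis assoc : forall x y z, mul x (mul y z) = mul (mul x y) z.
Hypothesis idl : forall x, mul e x = x.
Hypothesis idr : forall x, mul x e = x.

Lemma ker_rcong a : rcong mul (fun s t => mul a s = mul a t).
Proof.
split; [|split; [|split]] => //.
- by move=> p q r -> ->.
- by move=> p q s H; rewrite !assoc H.
Qed.

Lemma act_to_M n (H : list (('I_n * M) * ('I_n * M))) (phi : 'I_n * M -> M)
  (phim : forall p s, phi (p.1, mul p.2 s) = mul (phi p) s) G p q :
  (forall h, In h H -> cg mul G (phi h.1) (phi h.2)) ->
  cong_gen mul H p q -> cg mul G (phi p) (phi q).
Proof.
move=> HG C; apply: (C (fun p q => cg mul G (phi p) (phi q))) => //.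
split; [|split; [|split]].
- move=> p0; exact: cg_refl.
- move=> p0 q0; exact: cg_sym.
- move=> p0 q0 r0; exact: cg_trans.
- move=> p0 q0 s H0; rewrite !phim; exact: cg_rmul.
Qed.

Lemma M_to_act n (H : list (('I_n * M) * ('I_n * M))) (k : 'I_n) G s t :
  (forall g, In g G -> cong_gen mul H (k, g.1) (k, g.2)) ->
  cg mul G s t -> cong_gen mul H (k, s) (k, t).
Proof.
move=> HG C R RR HH.
apply: (C (fun x y => R (k, x) (k, y))).
- case: RR => [Rr [Rs [Rt Rc]]]; split; [|split; [|split]].
  + by move=> x; apply: Rr.
  + by move=> x y; apply: Rs.
  + by move=> x y z; apply: Rt.
  + by move=> x y z Hxy; apply: (Rc (k, x) (k, y) z).
- by move=> g Hg; apply: HG.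
Qed.

Lemma act_cg_rcong n (H : list (('I_n * M) * ('I_n * M))) : right_congruence mul (cong_gen mul H).
Proof.
split; [|split; [|split]].
- by move=> p R [Rr _].
- by move=> p q C R RR HG; case: (RR) => [_ [Rs _]]; apply: Rs; apply: C.
- move=> p q r C1 C2 R RR HG; case: (RR) => [_ [_ [Rt _]]]; apply: Rt (C1 R RR HG) (C2 R RR HG).
- move=> p q s C R RR HG; case: (RR) => [_ [_ [_ Rc]]]; apply: Rc; exact: C.
Qed.

Lemma WRC_FRE : WRC mul -> FRE mul.
Proof.
move=> W a.
have fgX : fg_right_ideal mul (fun y => exists m, y = mul a m).
  exists 1, (fun _ => a) => y; split.
  - by case=> m ->; exists ord0, m.
  - by case=> k [m ->]; exists m.
have [n [x [H [Hx [Hs Hk]]]]] := W _ fgX.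
have [u Hu] := choice_fun Hx.
have [k0 [w Hw]] := Hs a (ex_intro _ e (esym (idr a))).
pose phi (p : 'I_n * M) := mul (u p.1) p.2.
have phim : forall p s, phi (p.1, mul p.2 s) = mul (phi p) s by move=> p s; rewrite /phi assoc.
have xphi : forall p, mul (x p.1) p.2 = mul a (phi p) by move=> p; rewrite /phi assoc -Hu.
exists ((e, mul (u k0) w) :: map (fun h => (phi h.1, phi h.2)) H) => s t; split.
- move=> Est.
  have C : cong_gen mul H (k0, mul w s) (k0, mul w t).
    apply/Hk => /=; by rewrite !assoc -Hw.
  have C'' : cg mul ((e, mul (u k0) w) :: map (fun h => (phi h.1, phi h.2)) H)
               (phi (k0, mul w s)) (phi (k0, mul w t)).
    apply: (@act_to_M n H phi phim); last exact: C.
    move=> h Hh; apply: (@cg_gen _ mul _ (phi h.1, phi h.2)); right.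
    exact: (in_map (fun h => (phi h.1, phi h.2))).
  have E : forall r, cg mul ((e, mul (u k0) w) :: map (fun h => (phi h.1, phi h.2)) H) r (phi (k0, mul w r)).
    move=> r; rewrite /phi /= assoc -{1}(idl r); apply: cg_rmul; apply: (@cg_gen _ mul _ (e, mul (u k0) w)); by left.
  apply: cg_trans (E s) _; apply: cg_trans C'' _; exact: cg_sym (E t).
- move=> C; apply: (C (fun s t => mul a s = mul a t)); first exact: ker_rcong.
  move=> h [<-|] /=.
  + by rewrite idr assoc -Hu -Hw.
  + case/in_map_iff => g [<- Hg] /=; rewrite -!xphi; apply/Hk; exact: (fun R RR HG => HG g Hg).
Qed.

Lemma WRC_PH : WRC mul -> PH mul.
Proof.
move=> W a b.
pose g (k : 'I_2) := if val k == 0 then a else b.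
have fgX : fg_right_ideal mul (fun y => (exists m, y = mul a m) \/ (exists m, y = mul b m)).
  exists 2, g => y; split.
  - case=> [[m ->]|[m ->]]; [exists ord0, m | exists (@Ordinal 2 1 isT), m]; done.
  - case=> k [m ->]; rewrite /g; case: (val k == 0); [left|right]; exists m; done.
have [n [x [H [Hx [Hs Hk]]]]] := W _ fgX.
have Hc : forall k, exists c : bool * M, if c.1 then x k = mul a c.2 else x k = mul b c.2.
  move=> k; case: (Hx k) => [[m E]|[m E]]; [exists (true, m) | exists (false, m)]; done.
have [c Hc'] := choice_fun Hc.
have [ka [wa Ha]] := Hs a (or_introl (ex_intro _ e (esym (idr a)))).
have [kb [wb Hb]] := Hs b (or_intror (ex_intro _ e (esym (idr b)))).
pose pairOf (h : ('I_n * M) * ('I_n * M)) :=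
  if (c h.1.1).1 then (mul (c h.1.1).2 h.1.2, mul (c h.2.1).2 h.2.2)
  else (mul (c h.2.1).2 h.2.2, mul (c h.1.1).2 h.1.2).
pose L1 := flat_map (fun h => if (c h.1.1).1 == (c h.2.1).1 then nil else pairOf h :: nil) H.
pose L2 := (if (c ka).1 then nil else (e, mul (c ka).2 wa) :: nil) ++
           (if (c kb).1 then (mul (c kb).2 wb, e) :: nil else nil).
have HkH : forall h, In h H -> mul (x h.1.1) h.1.2 = mul (x h.2.1) h.2.2.
  by move=> h Hh; apply/(Hk h.1 h.2) => R RR HG; apply: HG.
have pairOfE : forall h, In h H -> (c h.1.1).1 != (c h.2.1).1 ->
   mul a (pairOf h).1 = mul b (pairOf h).2 /\ mul (x h.1.1) h.1.2 = mul a (pairOf h).1.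
  move=> h Hh; have Ekh := HkH h Hh; rewrite /pairOf.
  move: (Hc' h.1.1) (Hc' h.2.1).
  case: (c h.1.1) => [[] w1]; case: (c h.2.1) => [[] w2] //= E1 E2 _.
  - by rewrite !assoc -E1 -E2.
  - by rewrite !assoc -E1 -E2.
have L2E : forall p, In p L2 -> mul a p.1 = mul b p.2.
  rewrite /L2; move: (Hc' ka) (Hc' kb).
  case: (c ka) => [[] wka]; case: (c kb) => [[] wkb] /= Ea Eb p //.
  1-3: move=> Hp; cbn in Hp; repeat match goal with H : _ \/ _ |- _ => destruct H end;
    try contradiction; subst p; cbn;
    first [by rewrite idr assoc -Ea -Ha | by rewrite idr assoc -Eb -Hb].
exists (L1 ++ L2); split.
- move=> p; rewrite in_app_iff; case; last exact: L2E.
  case/in_flat_map => h [Hh]; case: eqP => // Hne [<-|[]].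
  by case: (pairOfE h Hh (introN eqP Hne)).
- move=> s t Est.
  pose J y := exists p, In p (L1 ++ L2) /\ exists m, y = mul (mul a p.1) m.
  have Jr : forall y r, J y -> J (mul y r).
    by move=> y r [p [Hp [m ->]]]; exists p; split => //; exists (mul m r); rewrite assoc.
  pose R (p q : 'I_n * M) := mul (x p.1) p.2 = mul (x q.1) q.2 /\
                             ((c p.1).1 = (c q.1).1 \/ J (mul (x p.1) p.2)).
  have RR : right_congruence mul R.
    split; [|split; [|split]].
    - by move=> p; split => //; left.
    - move=> p q [E [S|Jp]]; split => //; [left|right] => //; by rewrite -E.
    - move=> p q r [E1 [S1|J1]] [E2 [S2|J2]]; split; try by rewrite E1 E2.
      + by left; rewrite S1 S2.
      + by right; rewrite E1.
      + by right.
      + by right.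
    - move=> p q r [E [S|Jp]]; split => /=; try by rewrite !assoc E.
      + by left.
      + by right; rewrite assoc; apply: Jr.
  have RH : forall h, In h H -> R h.1 h.2.
    move=> h Hh; split; first exact: HkH.
    case: (boolP ((c h.1.1).1 == (c h.2.1).1)) => [/eqP|] Hs'; [by left|right].
    case: (pairOfE h Hh Hs') => _ E; exists (pairOf h); split.
    + apply/in_app_iff; left; apply/in_flat_map; exists h; split => //.
      by rewrite (negbTE Hs'); left.
    + by exists e; rewrite idr.
  have C : cong_gen mul H (ka, mul wa s) (kb, mul wb t).
    by apply/Hk; rewrite /= !assoc -Ha -Hb.
  have [E0 HH] := C R RR RH.
  rewrite /= assoc -Ha in HH.
  case: HH => [Hside|//].
  move: (Hc' ka) (Hc' kb) Hside.
  rewrite /J /L2; case: (c ka) => [[] wka]; case: (c kb) => [[] wkb] //= Ea Eb _.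
  + exists (mul wkb wb, e); split; first by apply/in_app_iff; right; left.
    by exists t; rewrite /= assoc -Eb -Hb.
  + exists (e, mul wka wa); split; first by apply/in_app_iff; right; left.
    by exists s; rewrite idr.
Qed.


Lemma PH_FRE_WRC : PH mul -> FRE mul -> WRC mul.
Proof.
move=> Hph Hfre X [n [a Ha]].
have [G HG] := choice_fun Hfre.
have [L HL] := choice_fun (fun p : M * M => Hph p.1 p.2).
pose H1 := flat_map (fun k => map (fun g => ((k, g.1), (k, g.2))) (G (a k))) (enum 'I_n).
pose H2 := flat_map (fun k => flat_map (fun l =>
              map (fun p => ((k, p.1), (l, p.2))) (L (a k, a l))) (enum 'I_n)) (enum 'I_n).
have [_ [Rs [Rt Rc]]] := act_cg_rcong (H1 ++ H2).
exists n, a, (H1 ++ H2); split; [|split].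
- move=> k; apply/Ha; exists k, e; by rewrite idr.
- by move=> y /Ha.
- move=> [k m] [l m'] /=; split.
  + move=> E.
    case: (HL (a k, a l)) => /= HL1 /(_ m m' E) [pp [Hpp [z Hz]]].
    have C1 : cong_gen mul (H1 ++ H2) (k, m) (k, mul pp.1 z).
      apply: M_to_act; last by apply/(HG (a k)); rewrite assoc -Hz.
      move=> g Hg R RR HH; apply: (HH ((k, g.1), (k, g.2))); apply/in_app_iff; left.
      apply/in_flat_map; exists k; split; first exact: in_enum_ord.
      exact: (in_map (fun g => ((k, g.1), (k, g.2)))).
    have C2 : cong_gen mul (H1 ++ H2) (k, mul pp.1 z) (l, mul pp.2 z).
      apply: (Rc (k, pp.1) (l, pp.2) z) => R RR HH; apply: (HH ((k, pp.1), (l, pp.2))).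
      apply/in_app_iff; right; apply/in_flat_map; exists k; split; first exact: in_enum_ord.
      apply/in_flat_map; exists l; split; first exact: in_enum_ord.
      exact: (in_map (fun p => ((k, p.1), (l, p.2)))).
    have C3 : cong_gen mul (H1 ++ H2) (l, mul pp.2 z) (l, m').
      apply: M_to_act; last by apply/(HG (a l)); rewrite assoc -(HL1 pp Hpp) -Hz E.
      move=> g Hg R RR HH; apply: (HH ((l, g.1), (l, g.2))); apply/in_app_iff; left.
      apply/in_flat_map; exists l; split; first exact: in_enum_ord.
      exact: (in_map (fun g => ((l, g.1), (l, g.2)))).
    exact: (Rt _ _ _ C1 (Rt _ _ _ C2 C3)).
  + move=> C; apply: (C (fun p q => mul (a p.1) p.2 = mul (a q.1) q.2)).
    * split; [|split; [|split]] => //.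
      - by move=> p q r -> ->.
      - by move=> p q r /= E; rewrite !assoc E.
    * move=> h /in_app_iff [].
      - case/in_flat_map => k1 [_ /in_map_iff [g [<- Hg]]] /=.
        by apply/(HG (a k1)); apply: cg_gen.
      - case/in_flat_map => k1 [_ /in_flat_map [l1 [_ /in_map_iff [p [<- Hp]]]]] /=.
        by case: (HL (a k1, a l1)) => /(_ p Hp).
Qed.

Lemma WRC_iff : WRC mul <-> PH mul /\ FRE mul.
Proof.
split; first by move=> W; split; [exact: WRC_PH | exact: WRC_FRE].
by case=> ??; apply: PH_FRE_WRC.
Qed.

End Mon.

Section Retract.
Variables (T M : Type) (mulT : T -> T -> T) (mul : M -> M -> M) (i : T -> M) (p : M -> T).
Hypothesis assocT : forall x y z, mulT x (mulT y z) = mulT (mulT x y) z.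
Hypothesis im : forall x y, i (mulT x y) = mul (i x) (i y).
Hypothesis pm : forall x y, p (mul x y) = mulT (p x) (p y).
Hypothesis pi : forall x, p (i x) = x.

Lemma retract_PH : PH mul -> PH mulT.
Proof.
move=> H a b; have [L [HL1 HL2]] := H (i a) (i b).
exists (map (fun q => (p q.1, p q.2)) L); split.
- move=> q /in_map_iff [q' [<- Hq']] /=.
  by rewrite -(pi a) -(pi b) -!pm HL1.
- move=> s t E.
  have E' : mul (i a) (i s) = mul (i b) (i t) by rewrite -!im E.
  have [q [Hq [m Hm]]] := HL2 _ _ E'.
  exists (p q.1, p q.2); split; first exact: (in_map (fun q => (p q.1, p q.2))).
  exists (p m) => /=; by rewrite -{1}(pi a) -{1}(pi s) -pm Hm !pm pi.
Qed.

Lemma retract_FRE : FRE mul -> FRE mulT.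
Proof.
move=> H a; have [G HG] := H (i a).
exists (map (fun q => (p q.1, p q.2)) G) => s t; split.
- move=> E; have /HG C : mul (i a) (i s) = mul (i a) (i t) by rewrite -!im E.
  by have := cg_map pm C; rewrite !pi.
- move=> C; apply: (C (fun s t => mulT a s = mulT a t)); first exact: ker_rcong.
  move=> h /in_map_iff [q [<- Hq]] /=.
  by rewrite -(pi a) -!pm; congr p; apply/HG; apply: cg_gen.
Qed.
End Retract.

Lemma adjoin_assoc {T : Type} (op : T -> T -> T)
  (assoc : forall x y z, op x (op y z) = op (op x y) z) x y z :
  adjoin_one op x (adjoin_one op y z) = adjoin_one op (adjoin_one op x y) z.
Proof. by case: x => [x|]; case: y => [y|]; case: z => [z|] //=; rewrite assoc. Qed.

Section Adjoin.
Variables (M : Type) (mul : M -> M -> M) (e : M).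
Hypothesis assoc : forall x y z, mul x (mul y z) = mul (mul x y) z.
Hypothesis idl : forall x, mul e x = x.
Hypothesis idr : forall x, mul x e = x.

Let mulA := adjoin_one mul.
Let pr (x : option M) := match x with None => e | Some y => y end.
Lemma SomeE a s : mulA (Some a) s = Some (mul a (pr s)).
Proof. by case: s => [s|] //=; rewrite idr. Qed.

Lemma adjoin_PH : PH mul -> PH mulA.
Proof.
move=> H [a|] [b|].
- have [L [HL1 HL2]] := H a b.
  exists (map (fun q => (Some q.1, Some q.2)) L); split.
  + by move=> q /in_map_iff [q' [<- Hq']] /=; rewrite HL1.
  + move=> s t; rewrite !SomeE => [[]] /HL2 [q [Hq [m Hm]]].
    exists (Some q.1, Some q.2); split; first exact: (in_map (fun q => (Some q.1, Some q.2))).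
    by exists (Some m); rewrite /= Hm.
- exists ((None, Some a) :: nil); split.
  + by move=> q [<-|[]].
  + by move=> s t E; exists (None, Some a); split; [left|exists s].
- exists ((Some b, None) :: nil); split.
  + by move=> q [<-|[]].
  + by move=> s t E; exists (Some b, None); split; [left|exists t; rewrite E].
- exists ((None, None) :: nil); split.
  + by move=> q [<-|[]].
  + by move=> s t E; exists (None, None); split; [left|exists s].
Qed.

Lemma adjoin_FRE : FRE mul -> FRE mulA.
Proof.
move=> H [a|].
- have [G HG] := H a.
  set G' := (None, Some e) :: map (fun q => (Some q.1, Some q.2)) G.
  exists G' => s t; split.
  + rewrite !SomeE => [[]] /HG C.
    have C' := cg_map (mulN := mulA) (f := Some) (fun x y => erefl) C.
    have C'' : cg mulA G' (Some (pr s)) (Some (pr t)).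
      apply: cg_sub C' => h Hh; apply: cg_gen; by right.
    have Ep : forall r, cg mulA G' r (Some (pr r)).
      case=> [r|]; first exact: cg_refl.
      by apply: (@cg_gen _ mulA G' (None, Some e)); left.
    apply: cg_trans (Ep s) _; apply: cg_trans C'' _; exact: cg_sym (Ep t).
  + move=> C; apply: (C (fun s t => mulA (Some a) s = mulA (Some a) t)).
    * apply: ker_rcong; exact: adjoin_assoc.
    * move=> h [<-|/in_map_iff [q [<- Hq]]] /=; first by rewrite idr.
      by congr Some; apply/HG; apply: cg_gen.
- exists nil => s t; split.
  + move=> /= ->; exact: cg_refl.
  + move=> C; apply: (C (fun s t => mulA None s = mulA None t)) => //.
    apply: ker_rcong; exact: adjoin_assoc.
Qed.

Lemma adjoin_WRC : WRC mul <-> WRC mulA.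
Proof.
have idlA : forall x, mulA None x = x by [].
have idrA : forall x, mulA x None = x by case.
rewrite (WRC_iff assoc idl idr) (WRC_iff (adjoin_assoc assoc) idlA idrA); split.
- by case=> ??; split; [apply: adjoin_PH | apply: adjoin_FRE].
- case=> ??; split.
  + apply: (@retract_PH _ _ _ mulA Some pr) => //; by case=> [x|]; case=> [y|] //=; rewrite ?idl ?idr.
  + apply: (@retract_FRE _ _ _ mulA Some pr) => //; by case=> [x|]; case=> [y|] //=; rewrite ?idl ?idr.
Qed.
End Adjoin.

Lemma WRC1_iff {T : Type} (op : T -> T -> T)
  (assoc : forall x y z, op x (op y z) = op (op x y) z) :
  WRC1 op <-> WRC (adjoin_one op).
Proof.
rewrite /WRC1; case: (classic (exists e, is_identity op e)) => [[e He]|He].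
- have E := adjoin_WRC assoc (fun x => proj1 (He x)) (fun x => proj2 (He x)).
  split; first by case=> H _; apply/E; apply: H; exists e.
  by move=> W; split => // _; apply/E.
- split; first by case=> _; apply.
  by move=> W; split.
Qed.

Section Words.
Variables (I : Type) (S : I -> Type) (op : forall i, S i -> S i -> S i).
Hypothesis op_assoc : forall i (x y z : S i), op x (op y z) = op (op x y) z.

Local Notation L := (sigT S).
Local Notation wm := (wmul op).

Lemma merge_same i (a b : S i) :
  merge_letters op (existT S i a) (existT S i b) = Some (existT S i (op a b)).
Proof.
rewrite /merge_letters; case: excluded_middle_informative => [ee|//] /=.
by rewrite (proof_irrelevance _ ee erefl).
Qed.

Lemma cast_refl i (ee : i = i) (b : S i) : eq_rect i S b i ee = b.
Proof. by rewrite (proof_irrelevance _ ee erefl). Qed.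

Lemma merge_diff i j (a : S i) (b : S j) : i <> j ->
  merge_letters op (existT S i a) (existT S j b) = None.
Proof. by rewrite /merge_letters; case: excluded_middle_informative. Qed.

Lemma wmul_cons x u v : u <> nil -> wm (x :: u) v = x :: wm u v.
Proof. by case: u. Qed.

Lemma wmul_nil_r u : wm u nil = u.
Proof.
elim: u => [|x u IH] //; case: u IH => [|y u] IH //.
by rewrite wmul_cons // IH.
Qed.

Lemma wm1_cons x y v : wm (x :: nil) (y :: v) =
  match merge_letters op x y with Some z => z :: v | None => x :: y :: v end.
Proof. by []. Qed.

Lemma wmul_assoc u v w : wm u (wm v w) = wm (wm u v) w.
Proof.
elim: u => [|x u IH] //.
case: u IH => [|y u] IH; last first.
  rewrite (@wmul_cons x (y::u) v) // (@wmul_cons x (y::u) (wm v w)) // (@wmul_cons x (wm (y::u) v) w) ?IH //.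
  exact: wmul_nonnil.
clear IH; case: v => [|y v]; first by [].
case: x => i a; case: y => j b.
case: (excluded_middle_informative (i = j)) => [ee|ne]; last first.
  rewrite wm1_cons merge_diff // (@wmul_cons _ (existT S j b :: v) w) //.
  case: (wmul_hd op (existT S j b) v w) => y' [r [-> Hy]].
  case: y' Hy => j' b' Hj; simpl in Hj; rewrite wm1_cons merge_diff //; by rewrite Hj.
subst j; rewrite wm1_cons merge_same.
case: v => [|y' v].
- case: w => [|z w]; first by rewrite /= merge_same.
  rewrite wm1_cons.
  case: z => k c; case: (excluded_middle_informative (i = k)) => [ee|ne].
  + by subst k; rewrite !merge_same !wm1_cons !merge_same op_assoc.
  + by rewrite !merge_diff // !wm1_cons merge_same merge_diff.
- rewrite (@wmul_cons _ (y' :: v) w) // (@wmul_cons _ (y' :: v) w) //.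
  case: (wmul_hd op y' v w) => y'' [r [-> Hy]].
  by rewrite wm1_cons merge_same.
Qed.

Definition hdi i (w : list L) : option (S i) :=
  match w with
  | x :: _ => match excluded_middle_informative (projT1 x = i) with
              | left e => Some (eq_rect _ S (projT2 x) i e)
              | right _ => None end
  | nil => None
  end.
Definition resti i (w : list L) : list L :=
  match w with
  | x :: w' => match excluded_middle_informative (projT1 x = i) with
              | left _ => w'
              | right _ => w end
  | nil => nil
  end.
Definition star i (a : S i) (t : option (S i)) : S i :=
  match t with None => a | Some b => op a b end.
Definition noti i (r : list L) : Prop :=
  match r with nil => True | x :: _ => projT1 x <> i end.
Definition iota i (t : option (S i)) : list L :=
  match t with None => nil | Some a => existT S i a :: nil end.

Lemma wmul1 i (a : S i) w : wm (existT S i a :: nil) w = existT S i (star a (hdi i w)) :: resti i w.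
Proof.
case: w => [|[j b] w] //=.
case: excluded_middle_informative => [ee|ne] /=.
- by subst j; rewrite merge_same.
- by rewrite merge_diff // => E; apply: ne.
Qed.

Lemma wmul_app u x w : wm (u ++ x :: nil) w = u ++ wm (x :: nil) w.
Proof.
elim: u => [|y u IH] //=; rewrite -IH.
by case: u IH => [|z u] IH.
Qed.

Lemma hd_iota i t r : noti i r -> hdi i (wm (iota t) r) = t /\ resti i (wm (iota t) r) = r.
Proof.
case: t => [b|] /=.
- case: r => [|[j c] r] /= Hr.
  + by case: excluded_middle_informative => // ee; rewrite cast_refl.
  + rewrite merge_diff; last by move=> E; exact: (Hr (esym E)).
    by rewrite /hdi /resti /=; case: excluded_middle_informative => // ee; rewrite cast_refl.
- case: r => [|[j c] r] //= Hr.
  by case: excluded_middle_informative.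
Qed.

Lemma recon i (w : list L) : alt w -> w = wm (iota (hdi i w)) (resti i w) /\ noti i (resti i w).
Proof.
case: w => [|[j b] w] //= Hw.
case: excluded_middle_informative => [ee|ne] /=.
- subst j; case: w Hw => [|[k c] w] /= Hw; first by [].
  case: Hw => /= Hik _; rewrite merge_diff //; split => //; by move=> E; apply: Hik.
- by [].
Qed.

Lemma alt_app_r (l1 l2 : list L) : alt (l1 ++ l2) -> alt l2.
Proof. elim: l1 => [|x l1 IH] //= H; apply: IH; exact: alt_tail H. Qed.

Lemma alt_noti (x : L) r : alt (x :: r) -> noti (projT1 x) r.
Proof. by case: r => [|y r] //= [H _] E; apply: H. Qed.

Lemma iota_alt i t : alt (iota (i := i) t).
Proof. by case: t. Qed.

Lemma app_cons_eq (u v r r' : list L) X Y :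
  u ++ X :: r = v ++ Y :: r' ->
  (u = v /\ X = Y /\ r = r') \/ (exists q, v = u ++ X :: q) \/ (exists q, u = v ++ Y :: q).
Proof.
elim: u v => [|x u IH] v; case: v => [|y v] /=.
- by case=> -> ->; left.
- by case=> -> ->; right; left; exists v.
- by case=> -> <-; right; right; exists u.
- case=> -> /IH [[-> [-> ->]]|[[q ->]|[q ->]]]; [left|right;left;exists q|right;right;exists q]; done.
Qed.

Lemma existT_inj i (c d : S i) : existT S i c = existT S i d -> c = d.
Proof.
move=> H; have := projT2_eq H; move: (projT1_eq H) => /= ee.
by rewrite cast_refl.
Qed.

Definition Wd := {l : list L | alt l}.
Definition mW (u v : Wd) : Wd :=
  exist _ (wm (proj1_sig u) (proj1_sig v)) (wmul_alt op (proj2_sig u) (proj2_sig v)).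
Definition nilW : Wd := exist _ nil Logic.I.

Lemma W_eq (u v : Wd) : proj1_sig u = proj1_sig v -> u = v.
Proof. case: u => u pu; case: v => v pv /= E; subst v; by rewrite (proof_irrelevance _ pu pv). Qed.

Lemma mW_assoc x y z : mW x (mW y z) = mW (mW x y) z.
Proof. apply: W_eq; exact: wmul_assoc. Qed.
Lemma mW_idl x : mW nilW x = x.
Proof. by apply: W_eq. Qed.
Lemma mW_idr x : mW x nilW = x.
Proof. apply: W_eq; exact: wmul_nil_r. Qed.
Lemma mWnil u x : proj1_sig u = nil -> mW u x = x.
Proof. by move=> H; apply: W_eq; rewrite /= H. Qed.

Definition iotaW i (t : option (S i)) : Wd := exist _ (iota t) (iota_alt t).

Lemma resti_alt i (w : list L) : alt w -> alt (resti i w).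
Proof. case: w => [|x w] //= H; case: excluded_middle_informative => // _; exact: alt_tail H. Qed.

Definition restW i (s : Wd) : Wd := exist _ (resti i (proj1_sig s)) (resti_alt i (proj2_sig s)).

Lemma reconW i s : s = mW (iotaW (hdi i (proj1_sig s))) (restW i s).
Proof. apply: W_eq => /=; exact: (recon i (proj2_sig s)).1. Qed.

Lemma iota_mul i (t s : option (S i)) : iota (adjoin_one (@op i) t s) = wm (iota t) (iota s).
Proof. case: t => [a|]; case: s => [b|] //=; by rewrite merge_same. Qed.

Lemma iotaW_mul i (t s : option (S i)) : iotaW (adjoin_one (@op i) t s) = mW (iotaW t) (iotaW s).
Proof. apply: W_eq; exact: iota_mul. Qed.

Lemma adjS i (a : S i) t : adjoin_one (@op i) (Some a) t = Some (star a t).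
Proof. by case: t. Qed.

Lemma last_decomp (l : list L) : l <> nil -> exists u' i a, l = u' ++ existT S i a :: nil.
Proof.
elim: l => [//|x l IH] _; case: l IH => [|y l] IH.
- case: x => i a; by exists nil, i, a.
- have [u' [i [a ->]]] := IH (fun H => ltac:(discriminate H)).
  by exists (x :: u'), i, a.
Qed.

Lemma decomp u' i (a : S i) s :
  wm (u' ++ existT S i a :: nil) s = u' ++ existT S i (star a (hdi i s)) :: resti i s.
Proof. by rewrite wmul_app wmul1. Qed.

Lemma decomp_iota u' i (a : S i) t r : noti i r ->
  wm (u' ++ existT S i a :: nil) (wm (iota t) r) = u' ++ existT S i (star a t) :: r.
Proof. by move=> Hr; rewrite decomp; case: (hd_iota t Hr) => -> ->. Qed.

Lemma decomp_iota0 u' i (a : S i) t :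
  wm (u' ++ existT S i a :: nil) (iota t) = u' ++ existT S i (star a t) :: nil.
Proof. by rewrite -(wmul_nil_r (iota t)) decomp_iota. Qed.

Lemma mem_helper (u w : Wd) u' i (a : S i) t q :
  proj1_sig u = u' ++ existT S i a :: nil ->
  proj1_sig w = u' ++ existT S i (star a t) :: q -> exists m, w = mW u m.
Proof.
move=> Hu Hw.
have A : alt (existT S i (star a t) :: q) by have := proj2_sig w; rewrite Hw; exact: alt_app_r.
have Aq : alt q := alt_tail A.
have Nq : noti i q := alt_noti A.
exists (mW (iotaW t) (exist _ q Aq)); apply: W_eq; by rewrite /= Hu decomp_iota // Hw.
Qed.

Lemma FRE_W : (forall i, FRE (adjoin_one (@op i))) -> FRE mW.
Proof.
move=> HF u.
case: (classic (proj1_sig u = nil)) => [Hn|Hn].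
- exists nil => s t; split.
  + move=> E; have -> : s = t.
      apply: W_eq; have := f_equal (@proj1_sig _ _) E; by rewrite /= Hn.
    exact: cg_refl.
  + move=> C; apply: (C (fun s t => mW u s = mW u t)) => //; exact: (ker_rcong mW_assoc u).
- have [u' [i [a Hu]]] := last_decomp Hn.
  have [Gi HGi] := HF i (Some a).
  exists (map (fun h => (iotaW h.1, iotaW h.2)) Gi) => s t; split.
  + move=> E.
    have E' := f_equal (@proj1_sig _ _) E; rewrite /= Hu !decomp in E'.
    move/app_inv_head: E' => [/existT_inj E1 E2].
    have /HGi C : adjoin_one (@op i) (Some a) (hdi i (proj1_sig s)) =
                  adjoin_one (@op i) (Some a) (hdi i (proj1_sig t)) by rewrite !adjS E1.
    have C' := cg_map (mulN := mW) (f := @iotaW i) (@iotaW_mul i) C.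
    have ER : restW i s = restW i t by apply: W_eq.
    rewrite (reconW i s) (reconW i t) ER; exact: cg_rmul.
  + move=> C; apply: (C (fun s t => mW u s = mW u t)); first exact: (ker_rcong mW_assoc u).
    move=> h /in_map_iff [g [<- Hg]] /=.
    have := (HGi g.1 g.2).2 (cg_gen Hg); rewrite !adjS => [[E]].
    by apply: W_eq; rewrite /= Hu !decomp_iota0 E.
Qed.

Lemma PH_W : (forall i, PH (adjoin_one (@op i))) -> PH mW.
Proof.
move=> HP u v.
case: (classic (proj1_sig u = nil)) => [Hu0|Hu0].
  exists ((v, nilW) :: nil); split.
  - by move=> p [<-|[]] /=; rewrite mW_idr mWnil.
  - move=> s t E; exists (v, nilW); split; first by left.
    by exists t; rewrite E (mWnil _ Hu0).
case: (classic (proj1_sig v = nil)) => [Hv0|Hv0].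
  exists ((nilW, u) :: nil); split.
  - by move=> p [<-|[]] /=; rewrite mW_idr mWnil.
  - move=> s t E; exists (nilW, u); split; [by left| exists s; by rewrite mW_idr].
have [u' [i [a Hu]]] := last_decomp Hu0.
have [v' [j [b Hv]]] := last_decomp Hv0.
case: (classic (exists m, v = mW u m)) => [[m Hm]|NA].
  exists ((m, nilW) :: nil); split.
  - by move=> p [<-|[]] /=; rewrite mW_idr Hm.
  - move=> s t E; exists (m, nilW); split; [by left| exists t; by rewrite /= E Hm].
case: (classic (exists m, u = mW v m)) => [[m Hm]|NB].
  exists ((nilW, m) :: nil); split.
  - by move=> p [<-|[]] /=; rewrite mW_idr Hm.
  - move=> s t E; exists (nilW, m); split; [by left| exists s; by rewrite mW_idr].
case: (classic (u' = v' /\ i = j)) => [[Huv Eij]|NC]; last first.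
  exists nil; split => // s t E; exfalso.
  have E' := f_equal (@proj1_sig _ _) E; rewrite /= Hu Hv !decomp in E'.
  case: (app_cons_eq E') => [[Huv [Exy _]]|[[q Hq]|[q Hq]]].
  - apply: NC; split => //; exact: (f_equal (@projT1 _ _) Exy).
  - apply: NA; apply: (@mem_helper u v u' i a (hdi i (proj1_sig s)) (q ++ existT S j b :: nil)) => //.
    by rewrite Hv Hq -app_assoc.
  - apply: NB; apply: (@mem_helper v u v' j b (hdi j (proj1_sig t)) (q ++ existT S i a :: nil)) => //.
    by rewrite Hu Hq -app_assoc.
subst v' j.
have [Li [HL1 HL2]] := HP i (Some a) (Some b).
exists (map (fun p => (iotaW p.1, iotaW p.2)) Li); split.
- move=> p /in_map_iff [q [<- Hq]] /=.
  have := HL1 q Hq; rewrite !adjS => [[E]].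
  by apply: W_eq; rewrite /= Hu Hv !decomp_iota0 E.
- move=> s t E.
  have E' := f_equal (@proj1_sig _ _) E; rewrite /= Hu Hv !decomp in E'.
  move/app_inv_head: E' => [/existT_inj E1 E2].
  have E3 : adjoin_one (@op i) (Some a) (hdi i (proj1_sig s)) =
            adjoin_one (@op i) (Some b) (hdi i (proj1_sig t)) by rewrite !adjS E1.
  have [q [Hq [m Hm]]] := HL2 _ _ E3.
  exists (iotaW q.1, iotaW q.2); split; first exact: (in_map (fun p => (iotaW p.1, iotaW p.2))).
  exists (mW (iotaW m) (restW i s)) => /=.
  rewrite -!mW_assoc (mW_assoc (iotaW q.1)) -iotaW_mul.
  have Nr := (recon i (proj2_sig s)).2.
  apply: W_eq; rewrite /= Hu decomp decomp_iota //.
  move: Hm; rewrite -adjoin_assoc; last exact: op_assoc.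
  by rewrite !adjS => [[->]].
Qed.

(* retraction of the word monoid onto each factor *)
Fixpoint pil i (l : list L) : option (S i) :=
  match l with
  | nil => None
  | x :: l' => adjoin_one (@op i) (hdi i (x :: nil)) (pil i l')
  end.

Lemma letter_op i j (a b : S j) :
  hdi i (existT S j (op a b) :: nil) =
  adjoin_one (@op i) (hdi i (existT S j a :: nil)) (hdi i (existT S j b :: nil)).
Proof. rewrite /hdi /=; case: excluded_middle_informative => // ee; by subst. Qed.

Lemma adjR {T} (o : T -> T -> T) x : adjoin_one o x None = x.
Proof. by case: x. Qed.

Lemma pil_mul i u v : pil i (wm u v) = adjoin_one (@op i) (pil i u) (pil i v).
Proof.
have As := @adjoin_assoc _ (@op i) (@op_assoc i).
elim: u => [|x u IH] //.
case: u IH => [|y u] IH; last first.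
  by rewrite (@wmul_cons x (y :: u) v) //= IH As.
clear IH; case: v => [|y v]; first by rewrite adjR.
case: x => j a; case: y => k b.
case: (excluded_middle_informative (j = k)) => [ee|ne].
- subst k; rewrite wm1_cons merge_same /=.
  case: excluded_middle_informative => [ee|ne] /=; last by case: (pil i v).
  subst i; case: (pil j v) => [c|] /=; by rewrite ?op_assoc.
- rewrite wm1_cons merge_diff //= -!As.
  by case: (hdi i (existT S j a :: nil)).
Qed.

Lemma pil_iota i t : pil i (iota t) = t.
Proof.
case: t => [a|] //=; rewrite /hdi /=.
by case: excluded_middle_informative => // ee; rewrite cast_refl.
Qed.

Definition piW i (w : Wd) : option (S i) := pil i (proj1_sig w).

Lemma factor_PH_FRE i : PH mW /\ FRE mW -> PH (adjoin_one (@op i)) /\ FRE (adjoin_one (@op i)).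
Proof.
case=> H1 H2; split.
- apply: (@retract_PH _ _ _ mW (@iotaW i) (piW i)) => //.
  1-3: first [exact: (adjoin_assoc (@op_assoc i)) | exact: iotaW_mul
             | move=> x y; exact: pil_mul | exact: pil_iota].
- apply: (@retract_FRE _ _ _ mW (@iotaW i) (piW i)) => //.
  all: first [exact: (adjoin_assoc (@op_assoc i)) | exact: iotaW_mul
             | move=> x y; exact: pil_mul | exact: pil_iota].
Qed.

Lemma W_PH_FRE : PH mW /\ FRE mW <-> forall i, PH (adjoin_one (@op i)) /\ FRE (adjoin_one (@op i)).
Proof.
split; first by move=> H i; apply: factor_PH_FRE.
move=> H; split; [apply: PH_W | apply: FRE_W] => i; by case: (H i).
Qed.

End Words.

Section Iso.
Variables (I : Type) (S : I -> Type) (op : forall i, S i -> S i -> S i).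
Hypothesis op_assoc : forall i (x y z : S i), op x (op y z) = op (op x y) z.

Lemma FP_eq (u v : FP S) : proj1_sig u = proj1_sig v -> u = v.
Proof. case: u => u pu; case: v => v pv /= E; subst v; by rewrite (proof_irrelevance _ pu pv). Qed.

Lemma fp_assoc x y z : fp_mul op x (fp_mul op y z) = fp_mul op (fp_mul op x y) z.
Proof. apply: FP_eq; exact: (wmul_assoc op_assoc). Qed.

Definition fW (x : option (FP S)) : Wd S :=
  match x with
  | None => nilW S
  | Some w => exist _ (proj1_sig w) (proj2 (proj2_sig w))
  end.

Definition gW (w : Wd S) : option (FP S) :=
  match excluded_middle_informative (proj1_sig w = nil) with
  | left _ => None
  | right ne => Some (exist _ (proj1_sig w) (conj ne (proj2_sig w)))
  end.

Lemma fW_mul x y : fW (adjoin_one (fp_mul op) x y) = mW op (fW x) (fW y).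
Proof.
case: x => [x|]; case: y => [y|]; apply: W_eq => //=.
by rewrite wmul_nil_r.
Qed.

Lemma gf x : gW (fW x) = x.
Proof.
rewrite /gW; case: x => [x|] /=; case: excluded_middle_informative => // H.
- by case: (proj2_sig x) => /(_ H).
- congr Some; exact: FP_eq.
Qed.

Lemma fg y : fW (gW y) = y.
Proof.
rewrite /gW; case: excluded_middle_informative => [E|ne]; apply: W_eq => //=.
Qed.

Lemma gW_mul x y : gW (mW op x y) = adjoin_one (fp_mul op) (gW x) (gW y).
Proof. by rewrite -{1}(fg x) -{1}(fg y) -fW_mul gf. Qed.

Lemma iso_PH_FRE :
  PH (adjoin_one (fp_mul op)) /\ FRE (adjoin_one (fp_mul op)) <-> PH (mW op) /\ FRE (mW op).
Proof.
have A1 := mW_assoc op_assoc.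
have A2 := adjoin_assoc fp_assoc.
split; case=> H1 H2.
- split.
  + exact: (@retract_PH _ _ _ (adjoin_one (fp_mul op)) gW fW gW_mul fW_mul fg H1).
  + exact: (@retract_FRE _ _ _ (adjoin_one (fp_mul op)) gW fW A1 gW_mul fW_mul fg H2).
- split.
  + exact: (@retract_PH _ _ _ (mW op) fW gW fW_mul gW_mul gf H1).
  + exact: (@retract_FRE _ _ _ (mW op) fW gW A2 fW_mul gW_mul gf H2).
Qed.
End Iso.

Unset Implicit Arguments.

Theorem mainTheorem3 (I : Type) (S : I -> Type)
    (op : forall i, S i -> S i -> S i)
    (op_assoc : forall i (x y z : S i), op i x (op i y z) = op i (op i x y) z) :
  WRC1 (@fp_mul I S op) <-> (forall i : I, WRC1 (op i)).
Proof.
have fa := @fp_assoc I S op op_assoc.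
rewrite (WRC1_iff fa).
have idlA : forall x, adjoin_one (fp_mul op) None x = x by [].
have idrA : forall x, adjoin_one (fp_mul op) x None = x by case.
rewrite (WRC_iff (adjoin_assoc fa) idlA idrA) (iso_PH_FRE op_assoc) (W_PH_FRE op_assoc).
have E : forall i, WRC1 (op i) <-> PH (adjoin_one (op i)) /\ FRE (adjoin_one (op i)).
  move=> i; rewrite (WRC1_iff (op_assoc i)).
  have idl' : forall x, adjoin_one (op i) None x = x by [].
  have idr' : forall x, adjoin_one (op i) x None = x by case.
  exact: (WRC_iff (adjoin_assoc (op_assoc i)) idl' idr').
split => H i; [apply/E | apply/(E i)]; exact: H.
Qed.
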